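(* Among all spiro hexagonal chains with $n$ hexagons, $n\ge4$: (i) the unique spiro hexagonal chain with the minimum Wiener index is the spiro ortho-chain $O_n$; (ii) the unique spiro hexagonal chain with the second minimal Wiener index is the spiro hexagonal chain with cut-vertex sequence $(c_2,\dots,c_{n-1})=(o_1,\dots,o_{n-3},m_{n-2})$; (iii) the unique spiro hexagonal chain with the third minimal Wiener index is the spiro hexagonal chain with cut-vertex sequence $(c_2,\dots,c_{n-1})=(o_1,\dots,o_{n-4},m_{n-3},o_{n-2})$.
   Context: The Wiener index is $W(G)=\sum_{\{u,v\}\subseteq V(G)}d_G(u,v)$, $d_G$ the shortest-path distance. A spiro hexagonal chain of length $n$, $G_n=H_0H_1\cdots H_{n-1}$, is a connected graph in which every block is a hexagon (6-cycle) $H_0,\dots,H_{n-1}$, each hexagon has at most two cut-vertices, each cut-vertex is shared by exactly two hexagons, and for $k=1,\dots,n-1$ the hexagons $H_{k-1}$ and $H_k$ share the cut-vertex $c_k$. For $k\ge1$, a vertex of $H_k$ at distance $1$, $2$, $3$ from $c_k$ is called an ortho-, meta-, para-vertex of $H_k$, denoted $o_k,m_k,p_k$. For $2\le k\le n-1$, $c_k$ is one of $o_{k-1},m_{k-1},p_{k-1}$, and the sequence $(c_2,\dots,c_{n-1})$ (recording these types) is the cut-vertex sequence, which determines the chain up to isomorphism; chains are considered up to isomorphism. The spiro ortho-chain $O_n$ is the chain with $c_k=o_{k-1}$ for all $2\le k\le n-1$. *)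

(* Defs.v *)
From mathcomp Require Import all_boot all_fingroup.
Set Implicit Arguments. Unset Strict Implicit. Unset Printing Implicit Defensive.

Definition ball (T : finType) (e : rel T) (k : nat) (u : T) : {set T} :=
  iter k (fun A => A :|: [set y | [exists x in A, e x y]]) [set u].

(** Shortest-path distance: least [k] such that [v] is reachable from [u]
    within [k] steps (for connected graphs, as here, it is always < #|T|). *)
Definition gdist (T : finType) (e : rel T) (u v : T) : nat :=
  find (fun k => v \in ball e k u) (iota 0 #|T|).

Definition wiener (N : nat) (e : rel 'I_N) : nat :=
  \sum_(u : 'I_N) \sum_(v : 'I_N | (u < v)%N) gdist e u v.

Definition graph_iso (N : nat) (e1 e2 : rel 'I_N) : Prop :=
  exists f : {perm 'I_N}, forall x y, e1 x y = e2 (f x) (f y).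

(** Type of a cut vertex c_k in H_{k-1}: ortho / meta / para,
    i.e. distance 1 / 2 / 3 from c_{k-1} in H_{k-1}. *)
Inductive ctype := Ortho | Meta | Para.

Definition ctype_dist (t : ctype) : nat :=
  match t with Ortho => 1 | Meta => 2 | Para => 3 end.

(** Concrete labelling of the chain G_n = H_0 ... H_{n-1} determined by the
    cut-vertex sequence [s] = (c_2,...,c_{n-1}) (an element of [s] at index
    i is the type of c_{i+2}).
    Hexagon H_0 has vertices 0..5 (in cyclic order), and c_1 = 0.
    For k >= 1, hexagon H_k has cyclic vertex list
      [c_k; 5k+1; 5k+2; 5k+3; 5k+4; 5k+5],
    and for k >= 2, c_k is the vertex of H_{k-1} at cyclic position
    d = ctype_dist (type of c_k), i.e. at distance d from c_{k-1}. *)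
Definition spiro_cut (s : seq ctype) (k : nat) : nat :=
  if (k <= 1)%N then 0 else 5 * k.-1 + ctype_dist (nth Ortho s (k - 2)).

Definition spiro_hv (s : seq ctype) (k j : nat) : nat :=
  if k == 0 then j else if j == 0 then spiro_cut s k else 5 * k + j.

Definition spiro_adj_nat (n : nat) (s : seq ctype) (u v : nat) : bool :=
  has (fun k => has (fun j =>
         let a := spiro_hv s k j in let b := spiro_hv s k ((j.+1) %% 6) in
         ((u == a) && (v == b)) || ((u == b) && (v == a)))
       (iota 0 6)) (iota 0 n).

Definition spiro_chain (n : nat) (s : seq ctype) : rel 'I_(5 * n + 1) :=
  fun x y => spiro_adj_nat n s x y.

Arguments spiro_chain : clear implicits.

Definition spiro_W (n : nat) (s : seq ctype) : nat := wiener (spiro_chain n s).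

Definition spiro_iso (n : nat) (s t : seq ctype) : Prop :=
  graph_iso (spiro_chain n s) (spiro_chain n t).

Definition seq_ortho (n : nat) : seq ctype := nseq (n - 2) Ortho.
Definition seq_second (n : nat) : seq ctype := rcons (nseq (n - 3) Ortho) Meta.
Definition seq_third (n : nat) : seq ctype :=
  rcons (rcons (nseq (n - 4) Ortho) Meta) Ortho.

(* Main.v *)
Require Import Defs.
From mathcomp Require Import all_boot all_fingroup.
From mathcomp Require Import zify.
Set Implicit Arguments. Unset Strict Implicit. Unset Printing Implicit Defensive.

Definition td (s : seq ctype) k := ctype_dist (nth Ortho s k.-1).
Definition ex s k := if k == 0 then 0 else td s k.
Definition cd (p q : nat) :=
  minn (if p <= q then q - p else p - q) (6 - (if p <= q then q - p else p - q)).

Lemma tt_bnd s k : 1 <= td s k <= 3.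
Proof. by rewrite /td; case: nth. Qed.

Lemma ex_le3 s k : ex s k <= 3.
Proof. rewrite /ex; case: eqP => // _; by have /andP[] := tt_bnd s k. Qed.

Lemma cd_sym p q : cd p q = cd q p.
Proof. rewrite /cd; case: (leqP p q); case: (leqP q p); lia. Qed.
Lemma cd_pp p : cd p p = 0.
Proof. rewrite /cd leqnn subnn; lia. Qed.
Lemma cd_0t t : t <= 3 -> cd 0 t = t.
Proof. rewrite /cd leq0n subn0; lia. Qed.
Lemma cd_le3 p q : cd p q <= 3.
Proof. rewrite /cd; case: (leqP p q); lia. Qed.
Lemma cd_eq0 p q : p < 6 -> q < 6 -> cd p q = 0 -> p = q.
Proof. rewrite /cd; case: (leqP p q); lia. Qed.

Ltac six x := case: x => [|[|[|[|[|[|x]]]]]] //=.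

Lemma cd_lip p j : p < 6 -> j < 6 ->
  cd p (j.+1 %% 6) <= (cd p j).+1 /\ cd p j <= (cd p (j.+1 %% 6)).+1.
Proof. by six p; six j. Qed.

Lemma cd_step p j : p < 6 -> j < 6 -> 0 < cd p j ->
  (cd p (j.+1 %% 6)).+1 = cd p j \/ (cd p ((j + 5) %% 6)).+1 = cd p j.
Proof. six p; six j; move=> *; (by left) || (by right). Qed.

Definition sumt s a b := \sum_(a <= k < b) td s k.
Definition Dh s (i p j q : nat) :=
  if i == j then cd p q else if i < j then cd p (ex s i) + sumt s i.+1 j + cd 0 q
  else cd q (ex s j) + sumt s j.+1 i + cd 0 p.
Definition bl x := (x - 1) %/ 5.
Definition ps x := x - 5 * bl x.
Definition D s x y := Dh s (bl x) (ps x) (bl y) (ps y).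

Lemma sumt0 s a : sumt s a a = 0.
Proof. by rewrite /sumt big_geq. Qed.
Lemma sumtR s a b : a <= b -> sumt s a b.+1 = sumt s a b + td s b.
Proof. by move=> h; rewrite /sumt big_nat_recr. Qed.
Lemma sumtL s a b : a < b -> sumt s a b = td s a + sumt s a.+1 b.
Proof. by move=> h; rewrite /sumt big_ltn. Qed.

Lemma Dh_sym s i p j q : Dh s i p j q = Dh s j q i p.
Proof.
rewrite /Dh; case: (ltngtP i j) => h //; exact: cd_sym.
Qed.

Lemma ex_tt s k : 0 < k -> ex s k = td s k.
Proof. by rewrite /ex; case: k. Qed.

Lemma Dh_cons s k i q : 0 < k ->
  Dh s k.-1 (ex s k.-1) i q = Dh s k 0 i q.
Proof.
move=> k0; rewrite /Dh.
case: (ltngtP k.-1 i) => h1; case: (ltngtP k i) => h2; try lia.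
- rewrite cd_pp (_ : k.-1.+1 = k); last by lia.
  rewrite (sumtL s h2) (cd_0t (ex_le3 s k)) ex_tt //; lia.
- subst i; rewrite cd_pp (_ : k.-1.+1 = k); last by lia.
  by rewrite sumt0.
- have -> : sumt s i.+1 k = sumt s i.+1 k.-1 + td s k.-1.
    by rewrite -sumtR ?(prednK k0) //; lia.
  rewrite (cd_0t (ex_le3 s k.-1)) (ex_tt s (_ : 0 < k.-1)); last by lia.
  rewrite cd_pp; lia.
- subst i; rewrite (_ : k.-1.+1 = k); last by lia.
  by rewrite sumt0 cd_pp !addn0 cd_sym.
Qed.

Lemma cut_eq s k : 1 < k -> spiro_cut s k = 5 * k.-1 + td s k.-1.
Proof.
case: k => [|[|k]] // _; rewrite /spiro_cut /td /=.
by rewrite subn2.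
Qed.

Lemma cut_ex s k : 0 < k -> spiro_cut s k = 5 * k.-1 + ex s k.-1.
Proof.
case: k => [|[|k]] _ //.
by rewrite cut_eq // ex_tt.
Qed.

Lemma hv_rep s x : spiro_hv s (bl x) (ps x) = x.
Proof.
rewrite /spiro_hv /ps /bl.
case: eqP => h; first lia.
case: eqP => h2; lia.
Qed.

Lemma bl_small k j : (k == 0) && (j < 6) || (0 < k) && (0 < j < 6) ->
  bl (if k == 0 then j else 5 * k + j) = k /\ ps (if k == 0 then j else 5 * k + j) = j.
Proof.
rewrite /ps /bl; case/orP=> /andP[/eqP h1 h2].
- rewrite h1 eqxx; lia.
- have -> : (k == 0) = false by apply/eqP; lia.
  move/andP: h2 => [h2 h3]; lia.
Qed.

Lemma bl_cut s k : 0 < k -> bl (spiro_cut s k) = k.-1 /\ ps (spiro_cut s k) = ex s k.-1.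
Proof.
move=> k0; rewrite cut_ex //.
have := ex_le3 s k.-1.
have : (k.-1 == 0) || (0 < ex s k.-1).
  case: eqP => //= h; rewrite ex_tt; [by have /andP[] := tt_bnd s k.-1 | lia].
rewrite /ps /bl; case: eqP => h.
- rewrite h /ex /=; lia.
- lia.
Qed.

Lemma Dhv s k j y : j < 6 ->
  D s (spiro_hv s k j) y = Dh s k j (bl y) (ps y).
Proof.
move=> j6; rewrite /D /spiro_hv.
case: eqP => k0.
- have [] := @bl_small 0 j; first by rewrite j6.
  by rewrite k0 => -> ->.
case: eqP => j0.
- have k1 : 0 < k by lia.
  have [-> ->] := bl_cut s k1.
  by rewrite j0 Dh_cons.
- have [] := @bl_small k j.
    apply/orP; right; apply/andP; split; [lia | apply/andP; split; lia].
  have -> : (k == 0) = false by apply/eqP.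
  by move=> -> ->.
Qed.

Lemma D_sym s x y : D s x y = D s y x.
Proof. exact: Dh_sym. Qed.

Lemma hv_bnd s n k j : k < n -> j < 6 -> spiro_hv s k j < 5 * n + 1.
Proof.
move=> kn j6; rewrite /spiro_hv; case: eqP => k0; first lia.
case: eqP => j0; last lia.
rewrite cut_ex; last lia. have := ex_le3 s k.-1; lia.
Qed.

Lemma adjP n s u v : spiro_adj_nat n s u v -> exists k j, k < n /\ j < 6 /\
  ((u = spiro_hv s k j /\ v = spiro_hv s k (j.+1 %% 6)) \/
   (u = spiro_hv s k (j.+1 %% 6) /\ v = spiro_hv s k j)).
Proof.
case/hasP => k; rewrite mem_iota add0n => /andP[_ kn].
case/hasP => j; rewrite mem_iota add0n => /andP[_ j6].
case/orP => /andP[/eqP -> /eqP ->]; exists k, j; do 2 split => //; by [left | right].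
Qed.

Lemma adj_in n s k j u v : k < n -> j < 6 ->
  ((u = spiro_hv s k j /\ v = spiro_hv s k (j.+1 %% 6)) \/
   (u = spiro_hv s k (j.+1 %% 6) /\ v = spiro_hv s k j)) ->
  spiro_adj_nat n s u v.
Proof.
move=> kn j6 H; apply/hasP; exists k; first by rewrite mem_iota.
apply/hasP; exists j; first by rewrite mem_iota.
by case: H => [[-> ->]|[-> ->]] /=; rewrite !eqxx ?orbT.
Qed.

Lemma Dh_lip s k j i q : j < 6 -> q < 6 ->
  Dh s k (j.+1 %% 6) i q <= (Dh s k j i q).+1 /\
  Dh s k j i q <= (Dh s k (j.+1 %% 6) i q).+1.
Proof.
move=> j6 q6; rewrite /Dh; case: (ltngtP k i) => h.
- have e6 : ex s k < 6 by have := ex_le3 s k; lia.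
  have [] := cd_lip e6 j6.
  rewrite !(cd_sym _ (ex s k)); lia.
- have [] := cd_lip (isT : 0 < 6) j6; lia.
- have [] := cd_lip q6 j6.
  rewrite !(cd_sym q); lia.
Qed.

Lemma ps_lt6 x : ps x < 6.
Proof. rewrite /ps /bl; lia. Qed.

Lemma D_hv s x k j : j < 6 -> D s x (spiro_hv s k j) = Dh s k j (bl x) (ps x).
Proof. by move=> j6; rewrite D_sym Dhv. Qed.

Lemma D_lip n s x a b : spiro_adj_nat n s a b -> D s x b <= (D s x a).+1.
Proof.
case/adjP => k [j [kn [j6 H]]].
have j'6 : j.+1 %% 6 < 6 by rewrite ltn_mod.
have [L1 L2] := Dh_lip s k (bl x) j6 (ps_lt6 x).
by case: H => [[-> ->]|[-> ->]]; rewrite !D_hv.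
Qed.

Lemma mod_back J : J < 6 -> ((J + 5) %% 6).+1 %% 6 = J.
Proof. by case: J => [|[|[|[|[|[|J]]]]]]. Qed.

Lemma step_gen n s x K J c A : K < n -> J < 6 -> c < 6 ->
  (forall j', j' < 6 -> Dh s K j' (bl x) (ps x) = A + cd c j') ->
  0 < cd c J ->
  exists w, w < 5 * n + 1 /\ spiro_adj_nat n s w (spiro_hv s K J) /\
            (D s x w).+1 = D s x (spiro_hv s K J).
Proof.
move=> Kn J6 c6 HF cpos.
have j1 : J.+1 %% 6 < 6 by rewrite ltn_mod.
have j5 : (J + 5) %% 6 < 6 by rewrite ltn_mod.
case: (cd_step c6 J6 cpos) => E.
- exists (spiro_hv s K (J.+1 %% 6)); split; first exact: hv_bnd.
  split; first by apply: (adj_in (k := K) (j := J)) => //; right; split.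
  by rewrite !D_hv // !HF // -E addnS.
- exists (spiro_hv s K ((J + 5) %% 6)); split; first exact: hv_bnd.
  split.
    apply: (adj_in (k := K) (j := (J + 5) %% 6)) => //; left; split => //.
    by rewrite mod_back.
  rewrite !D_hv // !HF //; lia.
Qed.

Lemma hv_ex s k : spiro_hv s k (ex s k) = spiro_hv s k.+1 0.
Proof.
rewrite [in RHS]/spiro_hv /= cut_ex //= /spiro_hv.
case: eqP => [->|k0] //.
have -> : (ex s k == 0) = false.
  rewrite ex_tt; last lia. by have /andP[h _] := tt_bnd s k; case: eqP h => // ->.
by rewrite mulnC.
Qed.

Lemma bl_lt n x : x < 5 * n + 1 -> 0 < n -> bl x < n.
Proof. rewrite /bl; lia. Qed.

Lemma ps_pos x : 0 < bl x -> 0 < ps x.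
Proof. rewrite /ps /bl; lia. Qed.

Lemma D_pred n s x y : 0 < n -> x < 5 * n + 1 -> y < 5 * n + 1 -> 0 < D s x y ->
  exists w, w < 5 * n + 1 /\ spiro_adj_nat n s w y /\ (D s x w).+1 = D s x y.
Proof.
move=> n0 xn yn Dp.
have iN := bl_lt xn n0; have kN := bl_lt yn n0.
have q6 := ps_lt6 x; have j6 := ps_lt6 y.
have jp := @ps_pos y.
rewrite -(hv_rep s y) in Dp *.
rewrite D_hv // in Dp.
move: Dp iN q6 kN j6 jp.
move Ei: (bl x) => i; move Eq: (ps x) => q; move Ek: (bl y) => k; move Ej: (ps y) => j.
move=> Dp iN q6 kN j6 jp.
move: Dp; rewrite /Dh; case: (ltngtP k i) => h Dp.
-
  case: (eqVneq j (ex s k)) => hj.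
  + rewrite hj hv_ex.
    case: (ltngtP k.+1 i) => h2; last first.
    * apply: (step_gen (c := q) (A := 0)) => //; first lia.
      - move=> j' j'6; rewrite /Dh Ei Eq -h2 eqxx; by rewrite cd_sym.
      - move: Dp; rewrite hj cd_pp -h2 sumt0 cd_sym; lia.
    * lia.
    * apply: (step_gen (c := ex s k.+1) (A := sumt s k.+2 i + cd 0 q)) => //; first lia.
      - have := ex_le3 s k.+1; lia.
      - move=> j' j'6; rewrite /Dh Ei Eq; case: (ltngtP k.+1 i) => h'; try (exfalso; lia).
        rewrite (cd_sym j'); lia.
      - rewrite cd_sym cd_0t ?ex_le3 // ex_tt //.
        by have /andP[] := tt_bnd s k.+1.
  + apply: (step_gen (c := ex s k) (A := sumt s k.+1 i + cd 0 q)) => //.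
    * have := ex_le3 s k; lia.
    * move=> j' j'6; rewrite /Dh Ei Eq; case: (ltngtP k i) => h'; try (exfalso; lia).
      rewrite (cd_sym j'); lia.
    * rewrite lt0n; apply/negP => /eqP /cd_eq0 H; apply/eqP: hj.
      have := ex_le3 s k; move=> e3; rewrite H //; lia.
-
  apply: (step_gen (c := 0) (A := cd q (ex s i) + sumt s i.+1 k)) => //.
  * move=> j' j'6; rewrite /Dh Ei Eq; case: (ltngtP k i) => h'; try (exfalso; lia).
    lia.
  * have := jp (leq_trans (ltn0Sn i) h); rewrite /cd leq0n subn0; lia.
- apply: (step_gen (c := q) (A := 0)) => //.
  * move=> j' j'6; rewrite /Dh Ei Eq h; case: (ltngtP i i) => h'; try (exfalso; lia).
    by rewrite cd_sym.
  * by rewrite cd_sym.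
Qed.

Lemma ballS (T : finType) (e : rel T) k u :
  ball e k.+1 u = ball e k u :|: [set y | [exists x in ball e k u, e x y]].
Proof. by rewrite /ball iterS. Qed.

Lemma ball_lip (T : finType) (e : rel T) (f : T -> nat) u : f u = 0 ->
  (forall a b, e a b -> f b <= (f a).+1) ->
  forall k v, v \in ball e k u -> f v <= k.
Proof.
move=> f0 fl; elim=> [|k IH] v.
- rewrite /ball /= inE => /eqP ->; by rewrite f0.
- rewrite ballS inE => /orP[H | ].
    by have := IH _ H; lia.
  rewrite inE => /existsP [w /andP[wb ewv]].
  have := IH _ wb; have := fl _ _ ewv; lia.
Qed.

Lemma ball_reach (T : finType) (e : rel T) (f : T -> nat) u :
  (forall y, f y = 0 -> y = u) ->
  (forall y, 0 < f y -> exists w, e w y /\ (f w).+1 = f y) ->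
  forall y, y \in ball e (f y) u.
Proof.
move=> f0 fp.
have: forall d y, f y = d -> y \in ball e d u.
  elim=> [|d IH] y fy.
  - by rewrite (f0 _ fy) /ball /= inE.
  - have [w [ewy fw]] := fp y (ltac:(lia)).
    rewrite ballS !inE; apply/orP; right; apply/existsP; exists w.
    rewrite ewy andbT; apply: IH; lia.
by move=> H y; apply: H.
Qed.

Lemma find_iota_eq (p : pred nat) N m : m < N -> p m ->
  (forall i, i < m -> ~~ p i) -> find p (iota 0 N) = m.
Proof.
move=> mN pm before.
have hs : has p (iota 0 N) by apply/hasP; exists m => //; rewrite mem_iota.
have fN : find p (iota 0 N) < N by rewrite -[X in _ < X](size_iota 0 N) -has_find.
case: (ltngtP (find p (iota 0 N)) m) => // h.
- have := nth_find 0 hs; rewrite nth_iota // add0n.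
  by move/negP: (before _ h).
- by have := before_find 0 h; rewrite nth_iota // add0n pm.
Qed.

Lemma gdist_eq (T : finType) (e : rel T) (f : T -> nat) u v :
  f u = 0 -> (forall y, f y = 0 -> y = u) ->
  (forall a b, e a b -> f b <= (f a).+1) ->
  (forall y, 0 < f y -> exists w, e w y /\ (f w).+1 = f y) ->
  f v < #|T| -> gdist e u v = f v.
Proof.
move=> f0 fz fl fp fv; rewrite /gdist.
apply: find_iota_eq => //; first exact: ball_reach.
move=> i iv; apply/negP => /(ball_lip f0 fl); lia.
Qed.

Lemma sumt_bnd s a b : sumt s a b <= 3 * (b - a).
Proof.
rewrite /sumt; apply: leq_trans (_ : \sum_(a <= k < b) 3 <= _).
  by apply: leq_sum => k _; have /andP[] := tt_bnd s k.
by rewrite sum_nat_const_nat mulnC.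
Qed.

Lemma Dh_bnd s n i p j q : i < n -> j < n -> Dh s i p j q <= 3 * n.
Proof.
move=> iN jN; rewrite /Dh.
have := cd_le3 p q; have := cd_le3 p (ex s i); have := cd_le3 q (ex s j).
have := cd_le3 0 q; have := cd_le3 0 p.
have := sumt_bnd s i.+1 j; have := sumt_bnd s j.+1 i.
case: (ltngtP i j); lia.
Qed.

Lemma D_zero n s x y : x < 5 * n + 1 -> y < 5 * n + 1 -> D s x y = 0 -> x = y.
Proof.
move=> xn yn; rewrite /D /Dh.
have px := ps_lt6 x; have py := ps_lt6 y.
have ppx := @ps_pos x; have ppy := @ps_pos y.
case: (ltngtP (bl x) (bl y)) => h.
- have := ppy (leq_trans (ltn0Sn _) h); rewrite /cd leq0n subn0; lia.
- have := ppx (leq_trans (ltn0Sn _) h); rewrite /cd leq0n subn0; lia.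
- move=> /cd_eq0 e; rewrite -(hv_rep s x) -(hv_rep s y) h e //.
Qed.

Lemma D_self s x : D s x x = 0.
Proof. by rewrite /D /Dh eqxx cd_pp. Qed.

Lemma gdist_D n s (u v : 'I_(5 * n + 1)) : 0 < n ->
  gdist (spiro_chain n s) u v = D s u v.
Proof.
move=> n0.
apply: (gdist_eq (f := fun y : 'I_(5 * n + 1) => D s u y)).
- exact: D_self.
- move=> y /D_zero h; apply/val_inj; symmetry; exact: h.
- move=> a b; exact: D_lip.
- move=> y yp.
  have [w [wN [adj Hw]]] := D_pred n0 (ltn_ord u) (ltn_ord y) yp.
  by exists (Ordinal wN).
- rewrite card_ord /D.
  have := Dh_bnd s (ps u) (ps v) (bl_lt (ltn_ord u) n0) (bl_lt (ltn_ord v) n0); lia.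
Qed.

Lemma sum_add (F : nat -> nat) m k :
  \sum_(u < m + k) F u = \sum_(u < m) F u + \sum_(t < k) F (m + t).
Proof. by rewrite big_split_ord. Qed.

Lemma sum_const_ord m c : \sum_(u < m) c = m * c.
Proof. by rewrite sum_nat_const card_ord. Qed.

Definition Pn s N := \sum_(u < N) \sum_(v < N | u < v) D s u v.
Definition Qn s v := \sum_(u < v) D s u v.

Lemma Pn_S s N : Pn s N.+1 = Pn s N + Qn s N.
Proof.
rewrite /Pn big_ord_recr /=.
rewrite [X in _ + X = _]big_pred0; last first.
  by move=> v /=; rewrite ltnNge -ltnS ltn_ord.
rewrite addn0 /Qn -big_split /=; apply: eq_bigr => u _.
rewrite big_mkcond big_ord_recr /= -big_mkcond /= ltn_ord.
by [].
Qed.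

Lemma Pn_add s m k : Pn s (m + k) = Pn s m + \sum_(t < k) Qn s (m + t).
Proof.
elim: k => [|k IH]; first by rewrite addn0 big_ord0 addn0.
by rewrite addnS Pn_S IH big_ord_recr /= addnA.
Qed.

Lemma bl_blk n r : 0 < n -> 0 < r <= 5 -> bl (5 * n + r) = n /\ ps (5 * n + r) = r.
Proof. move=> n0 h; rewrite /ps /bl; lia. Qed.

Definition Rn s n := \sum_(u < 5 * n + 1) D s u (spiro_hv s n 0).

Lemma D_new s n u r : 0 < n -> u < 5 * n + 1 -> 0 < r <= 5 ->
  D s u (5 * n + r) = D s u (spiro_hv s n 0) + cd 0 r.
Proof.
move=> n0 un rh; rewrite D_hv // /D.
have [-> ->] := bl_blk n0 rh.
have ul := bl_lt un n0.
rewrite /Dh; case: (ltngtP (bl u) n) => h; try lia.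
by rewrite cd_pp addn0.
Qed.

Lemma D_loc s n r r' : 0 < n -> 0 < r <= 5 -> 0 < r' <= 5 ->
  D s (5 * n + r) (5 * n + r') = cd r r'.
Proof.
move=> n0 h h'; rewrite /D; have [-> ->] := bl_blk n0 h; have [-> ->] := bl_blk n0 h'.
by rewrite /Dh eqxx.
Qed.

Lemma cd_sum t : 0 < t <= 3 -> cd 1 t + cd 2 t + cd 3 t + cd 4 t + cd 5 t = 9 - t.
Proof. by case: t => [|[|[|[|t]]]]. Qed.

Lemma Rn_S s n : 0 < n -> Rn s n.+1 = Rn s n + 5 * n * td s n + 9.
Proof.
move=> n0; rewrite /Rn (_ : 5 * n.+1 + 1 = (5 * n + 1) + 5); last lia.
rewrite (sum_add (fun u => D s u (spiro_hv s n.+1 0))).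
rewrite (eq_bigr (fun u : 'I_(5 * n + 1) => D s u (spiro_hv s n 0) + td s n)); last first.
  move=> u _; rewrite !D_hv //.
  have ul := bl_lt (ltn_ord u) n0.
  rewrite /Dh; case: (ltngtP (bl u) n) => h; try lia.
  case: (ltngtP (bl u) n.+1) => h'; try lia.
  by rewrite (sumtR s (_ : (bl u).+1 <= n)) // !cd_pp; lia.
rewrite big_split /= sum_const_ord.
rewrite !big_ord_recr big_ord0 /=.
have E r : 0 < r <= 5 -> D s (5 * n + 1 + r.-1) (spiro_hv s n.+1 0) = cd r (td s n).
  move=> rh; rewrite (_ : 5 * n + 1 + r.-1 = 5 * n + r); last lia.
  rewrite D_hv // /D; have [-> ->] := bl_blk n0 rh.
  rewrite /Dh; case: (ltngtP n.+1 n) => h; try lia.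
  by rewrite sumt0 ex_tt // cd_pp addn0 addn0 cd_sym.
rewrite (E 1) // (E 2) // (E 3) // (E 4) // (E 5) //.
have := cd_sum (tt_bnd s n); have := tt_bnd s n; lia.
Qed.

Lemma Qblk s n k : 0 < n -> k < 5 ->
  Qn s (5 * n + 1 + k) = Rn s n + (5 * n + 1) * cd 0 k.+1 + \sum_(t < k) cd t.+1 k.+1.
Proof.
move=> n0 k5.
rewrite /Qn (sum_add (fun u => D s u (5 * n + 1 + k))).
have e : 5 * n + 1 + k = 5 * n + k.+1 by lia.
rewrite e.
rewrite (eq_bigr (fun u : 'I_(5 * n + 1) => D s u (spiro_hv s n 0) + cd 0 k.+1)); last first.
  move=> u _; apply: D_new => //; lia.
rewrite big_split /= sum_const_ord -/(Rn s n); congr (_ + _).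
apply: eq_bigr => t _.
rewrite (_ : 5 * n + 1 + t = 5 * n + t.+1); last lia.
apply: D_loc => //; have := ltn_ord t; lia.
Qed.

Lemma Pn_blk s n : 0 < n -> Pn s (5 * n.+1 + 1) = Pn s (5 * n + 1) + 5 * Rn s n + 45 * n + 27.
Proof.
move=> n0; rewrite (_ : 5 * n.+1 + 1 = (5 * n + 1) + 5); last lia.
rewrite Pn_add !big_ord_recr big_ord0 /=.
rewrite !Qblk //.
rewrite !big_ord_recr !big_ord0 /=.
rewrite (_ : cd 0 1 = 1) // (_ : cd 0 2 = 2) // (_ : cd 0 3 = 3) // (_ : cd 0 4 = 2) // (_ : cd 0 5 = 1) // (_ : cd 1 2 = 1) // (_ : cd 1 3 = 2) // (_ : cd 2 3 = 1) // (_ : cd 1 4 = 3) // (_ : cd 2 4 = 2) // (_ : cd 3 4 = 1) // (_ : cd 1 5 = 2) // (_ : cd 2 5 = 3) // (_ : cd 3 5 = 2) // (_ : cd 4 5 = 1) //.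
lia.
Qed.

Lemma Rn_1 s : Rn s 1 = 9.
Proof.
rewrite /Rn /= !big_ord_recr big_ord0 /=.
by rewrite /D /Dh /=.
Qed.

Lemma Pn_6 s : Pn s 6 = 27.
Proof.
rewrite (_ : 6 = 0 + 6) // Pn_add /Pn big_ord0 add0n.
rewrite !big_ord_recr big_ord0 /= /Qn.
rewrite !big_ord_recr !big_ord0 /=.
by rewrite /D /Dh /=.
Qed.

Lemma ball_perm (T : finType) (e1 e2 : rel T) (f : {perm T}) u :
  (forall x y, e1 x y = e2 (f x) (f y)) ->
  forall k v, (v \in ball e1 k u) = (f v \in ball e2 k (f u)).
Proof.
move=> He; elim=> [|k IH] v.
- by rewrite /ball /= !inE (inj_eq perm_inj).
- rewrite !ballS !inE IH; congr (_ || _).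
  apply/existsP/existsP => [[x /andP[xb exv]]|[x' /andP[xb exv]]].
  + by exists (f x); rewrite -IH xb -He.
  + exists ((f^-1)%g x'); rewrite IH permKV xb He permKV //.
Qed.

Lemma gdist_perm (T : finType) (e1 e2 : rel T) (f : {perm T}) u v :
  (forall x y, e1 x y = e2 (f x) (f y)) ->
  gdist e1 u v = gdist e2 (f u) (f v).
Proof.
move=> He; rewrite /gdist; apply: eq_find => k; exact: ball_perm.
Qed.

Lemma half_sum N (g : 'I_N -> 'I_N -> nat) :
  (forall u v, g u v = g v u) -> (forall u, g u u = 0) ->
  2 * (\sum_(u : 'I_N) \sum_(v : 'I_N | u < v) g u v) = \sum_(u : 'I_N) \sum_(v : 'I_N) g u v.
Proof.
move=> gs g0.
have E : forall u, \sum_(v : 'I_N) g u v = \sum_(v : 'I_N | u < v) g u v + \sum_(v : 'I_N | v < u) g u v.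
  move=> u; rewrite (bigID (fun v : 'I_N => u < v)) /=; congr (_ + _).
  rewrite (bigID (fun v : 'I_N => v < u)) /=.
  rewrite [X in _ + X]big1 ?addn0; last first.
    move=> v /andP[]; rewrite -!leqNgt => h1 h2.
    have -> : v = u by apply/val_inj; apply/eqP; rewrite eqn_leq h1 h2.
    exact: g0.
  apply: eq_bigl => v; case: (ltngtP u v) => //.
rewrite (eq_bigr _ (fun u _ => E u)) big_split /=.
rewrite [X in _ = _ + X](eq_bigr (fun u : 'I_N => \sum_(v : 'I_N) (if v < u then g u v else 0))); last first.
  by move=> u _; rewrite big_mkcond.
rewrite [X in _ = _ + X]exchange_big /=.
rewrite [X in _ = _ + X](eq_bigr (fun v : 'I_N => \sum_(u : 'I_N | v < u) g v u)); last first.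
  by move=> v _; rewrite [RHS]big_mkcond; apply: eq_bigr => u _; rewrite gs.
by rewrite mul2n -addnn.
Qed.

Lemma sum_perm N (g : 'I_N -> 'I_N -> nat) (f : {perm 'I_N}) :
  \sum_u \sum_v g (f u) (f v) = \sum_u \sum_v g u v.
Proof.
rewrite [RHS](reindex_inj (h := f) perm_inj) /=; apply: eq_bigr => u _.
by rewrite [RHS](reindex_inj (h := f) perm_inj).
Qed.

Lemma W_iso n s t : 0 < n -> spiro_iso n s t -> spiro_W n s = spiro_W n t.
Proof.
move=> n0 [f Hf].
have H2 : forall s', 2 * spiro_W n s' = \sum_u \sum_v gdist (spiro_chain n s') u v.
  move=> s'; rewrite /spiro_W /wiener half_sum //.
  - by move=> u v; rewrite !gdist_D // D_sym.
  - by move=> u; rewrite gdist_D // D_self.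
apply/eqP; rewrite -(eqn_pmul2l (isT : 0 < 2)) H2 H2; apply/eqP.
rewrite -[RHS](sum_perm _ f); apply: eq_bigr => u _; apply: eq_bigr => v _.
exact: gdist_perm.
Qed.

Definition Y s n := \sum_(k < n) k * td s k.
Definition Zs s n := \sum_(i < n) Y s i.
Definition Kn n := \sum_(i < n) (90 * i + 27).

Lemma Rn_Y s n : 0 < n -> Rn s n = 5 * Y s n + 9 * n.
Proof.
elim: n => [//|[|n] IH] _.
- rewrite Rn_1 /Y big_ord_recr big_ord0 /=; lia.
- rewrite Rn_S // IH // /Y (big_ord_recr n.+1) /=; nia.
Qed.

Lemma Pn_Z s n : 0 < n -> Pn s (5 * n + 1) = 25 * Zs s n + Kn n.
Proof.
elim: n => [//|[|n] IH] _.
- rewrite Pn_6 /Zs /Kn !big_ord_recr !big_ord0 /= /Y big_ord0; lia.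
- rewrite Pn_blk // IH // Rn_Y // /Zs /Kn (big_ord_recr n.+1) /=.
  rewrite [\sum_(i < n.+2) (90 * i + 27)]big_ord_recr /=; lia.
Qed.

Lemma W_Z n s : 0 < n -> spiro_W n s = 25 * Zs s n + Kn n.
Proof.
move=> n0; rewrite -Pn_Z // /spiro_W /wiener /Pn.
apply: eq_bigr => u _; apply: eq_bigr => v _; exact: gdist_D.
Qed.

Lemma Zs_closed s n : Zs s n = \sum_(k < n) k * (n.-1 - k) * td s k.
Proof.
elim: n => [|n IH]; first by rewrite /Zs !big_ord0.
rewrite /Zs big_ord_recr /= -/(Zs s n) IH /Y.
rewrite [RHS]big_ord_recr /= subnn muln0 mul0n addn0 -big_split /=.
apply: eq_bigr => k _.
have := ltn_ord k; case: n {IH} k => [[]//|n] k kn /=.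
rewrite -mulnDl; congr (_ * _).
have kn' : k <= n by []. by rewrite subSn // mulnS addnC.
Qed.

Definition U (s : seq ctype) :=
  \sum_(j < size s) (j.+1 * (size s - j) * ctype_dist (nth Ortho s j)).

Lemma Zs_U s : Zs s (size s).+2 = U s.
Proof.
rewrite Zs_closed big_ord_recl /= mul0n add0n big_ord_recr /=.
rewrite (_ : (size s).+1 - (size s).+1 = 0); last lia.
rewrite muln0 mul0n addn0 /U; apply: eq_bigr => j _.
rewrite /td /=; congr (_ * _ * _); lia.
Qed.

Lemma tt_rev s n k : size s = n - 2 -> 0 < k -> k <= n - 2 ->
  td (rev s) k = td s (n.-1 - k).
Proof.
move=> sz k0 kn; rewrite /td nth_rev; last lia.
congr (ctype_dist (nth _ _ _)); lia.
Qed.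

Definition rx s n k := if k == n.-1 then 0 else ex s k.
Definition Fr s n x :=
  spiro_hv (rev s) (n.-1 - bl x) ((rx s n (bl x) + 6 - ps x) %% 6).

Lemma rx_le3 s n k : rx s n k <= 3.
Proof. rewrite /rx; case: eqP => // _; exact: ex_le3. Qed.

Lemma rx_rev s n k : size s = n - 2 -> k < n -> rx (rev s) n (n.-1 - k) = rx s n k.
Proof.
move=> sz kn; rewrite /rx.
case: (eqVneq k 0) => [->|k0].
- rewrite subn0 eqxx; case: eqP => // _; by rewrite /ex.
case: (eqVneq k n.-1) => [->|kn1].
- rewrite subnn; case: eqP => _ //; by rewrite /ex.
have -> : (n.-1 - k == n.-1) = false by apply/eqP; lia.
rewrite ex_tt; last lia. rewrite ex_tt; last lia.
rewrite (tt_rev sz); [congr td; lia | lia | lia].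
Qed.

Lemma Fr_hv s n k j : size s = n - 2 -> k < n -> j < 6 ->
  Fr s n (spiro_hv s k j) = spiro_hv (rev s) (n.-1 - k) ((rx s n k + 6 - j) %% 6).
Proof.
move=> sz kn j6; rewrite /Fr.
case: (eqVneq k 0) => [->|k0].
- have [] := @bl_small 0 j; first by rewrite j6.
  by rewrite /spiro_hv eqxx => -> ->.
case: (eqVneq j 0) => [->|j0].
- have k1 : 0 < k by lia.
  have -> : spiro_hv s k 0 = spiro_cut s k by rewrite /spiro_hv (negbTE k0).
  have [-> ->] := bl_cut s k1.
  have -> : rx s n k.-1 = ex s k.-1 by rewrite /rx; case: eqP => //; lia.
  rewrite (_ : (ex s k.-1 + 6 - ex s k.-1) %% 6 = 0); last first.
    by rewrite addnC addnK modnn.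
  rewrite (_ : n.-1 - k.-1 = (n.-1 - k).+1); last lia.
  rewrite -hv_ex; congr spiro_hv.
  rewrite subn0 modnDr modn_small; last by have := rx_le3 s n k; lia.
  rewrite -(rx_rev sz kn) /rx.
  case: eqP => [e|ne].
  + have -> : (n.-1 - k) = 0 by lia. by rewrite /ex.
  + by [].
- have [] := @bl_small k j.
    apply/orP; right; apply/andP; split; [lia | apply/andP; split; lia].
  have -> : spiro_hv s k j = 5 * k + j by rewrite /spiro_hv (negbTE k0) (negbTE j0).
  by rewrite (negbTE k0) => -> ->.
Qed.

Lemma refl_edge r j : r < 6 -> j < 6 ->
  ((r + 6 - (j.+1 %% 6)) %% 6).+1 %% 6 = (r + 6 - j) %% 6.
Proof. by case: r => [|[|[|[|[|[|r]]]]]]; case: j => [|[|[|[|[|[|j]]]]]]. Qed.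

Lemma refl_inv r j : r < 6 -> j < 6 -> (r + 6 - (r + 6 - j) %% 6) %% 6 = j.
Proof. by case: r => [|[|[|[|[|[|r]]]]]]; case: j => [|[|[|[|[|[|j]]]]]]. Qed.

Lemma Fr_edge s n x y : size s = n - 2 -> spiro_adj_nat n s x y ->
  spiro_adj_nat n (rev s) (Fr s n x) (Fr s n y).
Proof.
move=> sz /adjP [k [j [kn [j6 H]]]].
have j'6 : j.+1 %% 6 < 6 by rewrite ltn_mod.
have r6 : rx s n k < 6 by have := rx_le3 s n k; lia.
set b := (rx s n k + 6 - j.+1 %% 6) %% 6.
have b6 : b < 6 by rewrite ltn_mod.
have E := refl_edge r6 j6.
apply: (adj_in (k := n.-1 - k) (j := b)) => //; first lia.
case: H => [[-> ->]|[-> ->]]; rewrite !Fr_hv // -E; by [right | left].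
Qed.

Lemma Fr_inv s n x : size s = n - 2 -> 0 < n -> x < 5 * n + 1 ->
  Fr (rev s) n (Fr s n x) = x.
Proof.
move=> sz n0 xn.
have kn := bl_lt xn n0; have j6 := ps_lt6 x.
have r6 : rx s n (bl x) < 6 by have := rx_le3 s n (bl x); lia.
rewrite [Fr s n x]/Fr Fr_hv; first last.
- by rewrite ltn_mod.
- lia.
- by rewrite size_rev.
rewrite revK rx_rev // (_ : n.-1 - (n.-1 - bl x) = bl x); last lia.
by rewrite refl_inv // hv_rep.
Qed.

Lemma Fr_bnd s n x : 0 < n -> Fr s n x < 5 * n + 1.
Proof. move=> n0; apply: hv_bnd; [lia | by rewrite ltn_mod]. Qed.

Lemma iso_rev n s : 0 < n -> size s = n - 2 -> spiro_iso n s (rev s).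
Proof.
move=> n0 sz.
pose f (x : 'I_(5 * n + 1)) : 'I_(5 * n + 1) := Ordinal (Fr_bnd s x n0).
have finj : injective f.
  move=> x y /(congr1 val) /= /(congr1 (Fr (rev s) n)).
  by rewrite !Fr_inv // => /val_inj.
exists (perm finj) => x y; rewrite !permE /spiro_chain /=.
apply/idP/idP; first exact: Fr_edge.
have sz' : size (rev s) = n - 2 by rewrite size_rev.
move/(Fr_edge sz'); rewrite revK !Fr_inv //.
Qed.

Definition w m j := j.+1 * (m - j).
Notation dd s k := (ctype_dist (nth Ortho s k)).
Definition X (s : seq ctype) := \sum_(j < size s) w (size s) j * (dd s j - 1).
Definition Psingle (s : seq ctype) k0 := nth Ortho s k0 = Meta /\
  forall k, k < size s -> k != k0 -> nth Ortho s k = Ortho.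

Lemma dd_bnd (c : ctype) : 1 <= ctype_dist c <= 3.
Proof. by case: c. Qed.

Lemma dd1 (c : ctype) : ctype_dist c = 1 -> c = Ortho.
Proof. by case: c. Qed.

Lemma U_X s : U s = \sum_(j < size s) w (size s) j + X s.
Proof.
rewrite /U /X -big_split /=; apply: eq_bigr => j _.
have := dd_bnd (nth Ortho s j); rewrite /w; nia.
Qed.

Lemma X_ge1 s k : k < size s -> w (size s) k * (dd s k - 1) <= X s.
Proof. by move=> km; rewrite /X (bigD1 (Ordinal km)) //= leq_addr. Qed.

Lemma X_ge2 s k1 k2 : k1 < size s -> k2 < size s -> k1 != k2 ->
  w (size s) k1 * (dd s k1 - 1) + w (size s) k2 * (dd s k2 - 1) <= X s.
Proof.
move=> k1m k2m ne; rewrite /X (bigD1 (Ordinal k1m)) //= (bigD1 (Ordinal k2m)) /=; last first.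
  by rewrite -(inj_eq val_inj) /= eq_sym.
by rewrite addnA leq_addr.
Qed.

Lemma X_single s k0 : k0 < size s -> Psingle s k0 -> X s = w (size s) k0.
Proof.
move=> km [h0 h]; rewrite /X (bigD1 (Ordinal km)) //= h0 /= muln1 big1 ?addn0 //.
move=> k /= kn; rewrite h //; first by rewrite muln0.

Qed.

Lemma X_0 s : (forall k, k < size s -> nth Ortho s k = Ortho) -> X s = 0.
Proof. by move=> h; rewrite /X big1 // => k _; rewrite h // muln0. Qed.

Lemma w_ge m k : k < m -> m <= w m k.
Proof. rewrite /w; nia. Qed.

Lemma single_or s : s <> nseq (size s) Ortho -> X s < 2 * size s ->
  exists k, k < size s /\ Psingle s k /\ X s = w (size s) k.
Proof.
move=> ns Xb.
case: (boolP [exists k : 'I_(size s), dd s k != 1]) => [/existsP[k hk]|/existsPn H]; last first.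
  case: ns; apply: (eq_from_nth (x0 := Ortho)); first by rewrite size_nseq.
  move=> i im; rewrite nth_nseq im; apply: dd1.
  by have := H (Ordinal im); rewrite negbK => /eqP.
case: (boolP [exists k2 : 'I_(size s), (k2 != k) && (dd s k2 != 1)]).
  case/existsP => k2 /andP[ne hk2].
  have := X_ge2 (ltn_ord k2) (ltn_ord k) (ne : val k2 != val k).
  have := w_ge (ltn_ord k); have := w_ge (ltn_ord k2).
  have := dd_bnd (nth Ortho s k); have := dd_bnd (nth Ortho s k2).
  move: hk hk2 => /eqP hk /eqP hk2; nia.
move/existsPn => H.
have others : forall i, i < size s -> i != k -> nth Ortho s i = Ortho.
  move=> i im ne; apply: dd1.
  have := H (Ordinal im); rewrite -(inj_eq val_inj) /= ne /= negbK => /eqP //.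
have Xk : X s = w (size s) k * (dd s k - 1).
  rewrite /X (bigD1 k) //= big1 ?addn0 // => i /= ne.
  by rewrite others // ?muln0 //; move: ne; rewrite -(inj_eq val_inj).
have dk2 : dd s k = 2.
  have := w_ge (ltn_ord k); have := dd_bnd (nth Ortho s k); move: hk => /eqP hk.
  rewrite Xk in Xb; nia.
have Mk : nth Ortho s k = Meta by move: dk2; case: (nth Ortho s k).
exists k; split => //; split; first by split.
by rewrite Xk dk2 muln1.
Qed.

Lemma size_ortho n : size (seq_ortho n) = n - 2.
Proof. by rewrite size_nseq. Qed.
Lemma size_second n : 3 <= n -> size (seq_second n) = n - 2.
Proof. rewrite /seq_second size_rcons size_nseq; lia. Qed.
Lemma size_third n : 4 <= n -> size (seq_third n) = n - 2.
Proof. rewrite /seq_third !size_rcons size_nseq; lia. Qed.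

Lemma Ps_second n : 3 <= n -> Psingle (seq_second n) (n - 3).
Proof.
move=> n3; rewrite /Psingle /seq_second; split.
  by rewrite nth_rcons size_nseq ltnn eqxx.
move=> k; rewrite size_rcons size_nseq nth_rcons size_nseq nth_nseq => kn ne.
case: ifP => _; first by case: ifP.
by rewrite (negbTE ne).
Qed.

Lemma Ps_third n : 4 <= n -> Psingle (seq_third n) (n - 4).
Proof.
move=> n4; rewrite /Psingle /seq_third; split.
  rewrite nth_rcons size_rcons size_nseq (_ : n - 4 < (n - 4).+1) //.
  by rewrite nth_rcons size_nseq ltnn eqxx.
move=> k; rewrite !size_rcons size_nseq => kn ne.
rewrite nth_rcons size_rcons size_nseq nth_rcons size_nseq nth_nseq.
case: ifP => _.
- case: ifP => _; first by case: ifP.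
  by rewrite (negbTE ne).
- by case: ifP.
Qed.

Lemma Ps_rev t k0 : k0 < size t -> Psingle t k0 -> Psingle (rev t) (size t - k0.+1).
Proof.
move=> km [h0 h]; split.
  by rewrite nth_rev; [rewrite (_ : size t - (size t - k0.+1).+1 = k0) //; lia | lia].
move=> k; rewrite size_rev => kn ne; rewrite nth_rev //; apply: h; first lia.
apply/eqP => e; move/eqP: ne; apply; lia.
Qed.

Lemma single_eq s t k0 : size s = size t -> k0 < size s ->
  Psingle s k0 -> Psingle t k0 -> s = t.
Proof.
move=> sz km [hs0 hs] [ht0 ht]; apply: (eq_from_nth (x0 := Ortho)) => // i im.
case: (eqVneq i k0) => [->|ne]; first by rewrite hs0 ht0.
by rewrite hs // ht // -sz.
Qed.

Lemma iso_refl n s : spiro_iso n s s.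
Proof. by exists 1%g => x y; rewrite !perm1. Qed.

Lemma iso_revl n t : 0 < n -> size t = n - 2 -> spiro_iso n (rev t) t.
Proof.
move=> n0 sz; have := @iso_rev n (rev t) n0; rewrite revK size_rev; apply; exact: sz.
Qed.

Definition Cn n := 25 * \sum_(j < n - 2) w (n - 2) j + Kn n.

Lemma W_X n s : 2 <= n -> size s = n - 2 -> spiro_W n s = Cn n + 25 * X s.
Proof.
move=> n2 sz; rewrite W_Z; last lia.
rewrite (_ : n = (size s).+2) ?Zs_U ?U_X; last lia.
rewrite /Cn sz (_ : (n - 2).+2 = n); last lia.
lia.
Qed.

Lemma X_ortho n : X (seq_ortho n) = 0.
Proof. by apply: X_0 => k _; rewrite nth_nseq; case: ifP. Qed.

Lemma not_ortho n s : size s = n - 2 -> ~ spiro_iso n s (seq_ortho n) ->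
  s <> nseq (size s) Ortho.
Proof. by move=> sz ni e; apply: ni; rewrite e sz; apply: iso_refl. Qed.

Lemma X_big s : s <> nseq (size s) Ortho -> 2 <= size s ->
  2 * size s <= X s \/ exists k, k < size s /\ Psingle s k /\ X s = w (size s) k.
Proof.
move=> ns m2; case: (leqP (2 * size s) (X s)) => h; first by left.
by right; apply: single_or.
Qed.

Theorem theorem2p4 (n : nat) (hn : (4 <= n)%N) :
  (forall s : seq ctype, size s = (n - 2)%N ->
     ~ spiro_iso n s (seq_ortho n) ->
     (spiro_W n (seq_ortho n) < spiro_W n s)%N) /\
  (~ spiro_iso n (seq_second n) (seq_ortho n) /\
   forall s : seq ctype, size s = (n - 2)%N ->
     ~ spiro_iso n s (seq_ortho n) -> ~ spiro_iso n s (seq_second n) ->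
     (spiro_W n (seq_second n) < spiro_W n s)%N) /\
  ((5 <= n)%N ->
   ~ spiro_iso n (seq_third n) (seq_ortho n) /\
   ~ spiro_iso n (seq_third n) (seq_second n) /\
   forall s : seq ctype, size s = (n - 2)%N ->
     ~ spiro_iso n s (seq_ortho n) -> ~ spiro_iso n s (seq_second n) ->
     ~ spiro_iso n s (seq_third n) ->
     (spiro_W n (seq_third n) < spiro_W n s)%N).
Proof.
have n0 : 0 < n by lia.
have n2 : 2 <= n by lia.
have Wo : spiro_W n (seq_ortho n) = Cn n.
  by rewrite (W_X n2 (size_ortho n)) X_ortho addn0.
have s2 : size (seq_second n) = n - 2 by apply: size_second; lia.
have P2 : Psingle (seq_second n) (n - 3) by apply: Ps_second; lia.
have X2 : X (seq_second n) = n - 2.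
  rewrite (X_single (k0 := n - 3)) ?s2 //; last lia. rewrite /w; lia.
have W2 : spiro_W n (seq_second n) = Cn n + 25 * (n - 2) by rewrite (W_X n2 s2) X2.
have s3 := size_third hn.
have P3 := Ps_third hn.
have X3 : X (seq_third n) = 2 * (n - 3).
  rewrite (X_single (k0 := n - 4)) ?s3 //; last lia. rewrite /w; lia.
have W3 : spiro_W n (seq_third n) = Cn n + 25 * (2 * (n - 3)) by rewrite (W_X n2 s3) X3.
(* s = second or its reverse *)
have iso2 : forall s, size s = n - 2 -> forall k, k < size s -> Psingle s k ->
    (k = 0 \/ k = n - 3) -> spiro_iso n s (seq_second n).
  move=> s sz k km Pk [e|e]; subst k.
  - have Pr := Ps_rev (_ : n - 3 < size (seq_second n)) P2.
    have -> : s = rev (seq_second n).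
      apply: (single_eq (k0 := 0)) => //; first by rewrite size_rev s2.
      by move: (Pr ltac:(lia)); rewrite s2 (_ : n - 2 - (n - 3).+1 = 0) //; lia.
    by apply: iso_revl.
  - have -> : s = seq_second n by apply: (single_eq (k0 := n - 3)) => //; rewrite s2.
    exact: iso_refl.
have iso3 : forall s, size s = n - 2 -> forall k, k < size s -> Psingle s k ->
    (k = 1 \/ k = n - 4) -> spiro_iso n s (seq_third n).
  move=> s sz k km Pk [e|e]; subst k.
  - have Pr := Ps_rev (_ : n - 4 < size (seq_third n)) P3.
    have -> : s = rev (seq_third n).
      apply: (single_eq (k0 := 1)) => //; first by rewrite size_rev s3.
      by move: (Pr ltac:(lia)); rewrite s3 (_ : n - 2 - (n - 4).+1 = 1) //; lia.
    by apply: iso_revl.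
  - have -> : s = seq_third n by apply: (single_eq (k0 := n - 4)) => //; rewrite s3.
    exact: iso_refl.
split; [|split; [split|]].
- move=> s sz ni; have ns := not_ortho sz ni.
  rewrite Wo (W_X n2 sz).
  have [h|[k [km [Pk Xk]]]] := X_big ns ltac:(lia); first lia.
  have := w_ge km; lia.
- move/(W_iso n0); rewrite W2 Wo; lia.
- move=> s sz ni ni2; have ns := not_ortho sz ni.
  rewrite W2 (W_X n2 sz).
  have [h|[k [km [Pk Xk]]]] := X_big ns ltac:(lia); first lia.
  rewrite Xk.
  case: (leqP (w (size s) k) (n - 2)) => hw; last lia.
  exfalso; apply: ni2; apply: (iso2 s sz k km Pk).
  move: hw km; rewrite sz /w; nia.
- move=> n5; split; [|split].
  + move/(W_iso n0); rewrite W3 Wo; lia.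
  + move/(W_iso n0); rewrite W3 W2; lia.
  + move=> s sz ni ni2 ni3; have ns := not_ortho sz ni.
    rewrite W3 (W_X n2 sz).
    have [h|[k [km [Pk Xk]]]] := X_big ns ltac:(lia); first lia.
    rewrite Xk.
    case: (leqP (w (size s) k) (2 * (n - 3))) => hw; last lia.
    exfalso.
    have : k = 0 \/ k = n - 3 \/ k = 1 \/ k = n - 4.
      move: hw km; rewrite sz /w; nia.
    case=> [e|[e|e]].
    * apply: ni2; apply: (iso2 s sz k km Pk); lia.
    * apply: ni2; apply: (iso2 s sz k km Pk); lia.
    * apply: ni3; apply: (iso3 s sz k km Pk); lia.
Qed.
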